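(* Let $A$ be an associative algebra (with identity) over a field $\mathbf{k}$, let $q\in A$ be an idempotent, let $(A,q):=\{x\in A\mid qxq=qx\}$, and fix $k\in\mathbf{k}$. Then $(A,q)$ is a (right) Leibniz algebra under the bracket $$\langle x,y\rangle_{4,k}:=xy-yx+yqx-xyq+kxqy-kqyx,\qquad x,y\in(A,q),$$ i.e. $\langle\langle x,y\rangle,z\rangle=\langle x,\langle y,z\rangle\rangle+\langle\langle x,z\rangle,y\rangle$ for all $x,y,z\in(A,q)$.
   Context: $(A,q)$ is the (right) invariant algebra induced by the idempotent $q$; it is a subalgebra of $A$. A (right) Leibniz algebra is a vector space with a bilinear operation $\langle\,,\,\rangle$ satisfying $\langle\langle x,y\rangle,z\rangle=\langle x,\langle y,z\rangle\rangle+\langle\langle x,z\rangle,y\rangle$. *)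

(* Defs.v *)
From mathcomp Require Import all_boot all_algebra.
Set Implicit Arguments. Unset Strict Implicit. Unset Printing Implicit Defensive.
Import GRing.Theory.
Local Open Scope ring_scope.

Definition inv_alg (F : fieldType) (A : algType F) (q : A) (x : A) : Prop :=
  q * x * q = q * x.

Definition bracket4 (F : fieldType) (A : algType F) (q : A) (k : F) (x y : A) : A :=
  x * y - y * x + y * q * x - x * y * q + k *: (x * q * y) - k *: (q * y * x).

(* Main.v *)
Require Import Defs.
From mathcomp Require Import all_boot all_algebra.
Import GRing.Theory.
Local Open Scope ring_scope.

Lemma reorg (V : zmodType) (a1 a2 a3 a4 a5 a6 b1 b2 b3 b4 b5 b6 : V) :
  (a1+b1) + (a2+b2) + (a3+b3) + (a4+b4) + (a5+b5) + (a6+b6) =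
  (a1+a2+a3+a4+a5+a6) + (b1+b2+b3+b4+b5+b6).
Proof.
rewrite (addrACA a1) (addrACA (a1+a2)) (addrACA (a1+a2+a3)).
by rewrite (addrACA (a1+a2+a3+a4)) (addrACA (a1+a2+a3+a4+a5)).
Qed.

Section Aux.
Variables (F : fieldType) (A : algType F) (q : A) (k : F).
Hypothesis qq : q * q = q.

Lemma inv_mul x y : inv_alg q x -> inv_alg q y -> inv_alg q (x * y).
Proof.
rewrite /inv_alg => hx hy.
have e1 : q * (x * y) * q = q * x * q * (y * q) by rewrite hx !mulrA.
have e2 : q * x * q * (y * q) = q * x * (q * y * q) by rewrite !mulrA.
by rewrite e1 e2 hy !mulrA hx.
Qed.

Lemma inv_q : inv_alg q q.
Proof. by rewrite /inv_alg qq qq. Qed.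

Lemma inv_add x y : inv_alg q x -> inv_alg q y -> inv_alg q (x + y).
Proof. by rewrite /inv_alg => hx hy; rewrite mulrDr mulrDl hx hy. Qed.

Lemma inv_opp x : inv_alg q x -> inv_alg q (- x).
Proof. by rewrite /inv_alg => hx; rewrite mulrN mulNr hx. Qed.

Lemma inv_scale c x : inv_alg q x -> inv_alg q (c *: x).
Proof. by rewrite /inv_alg => hx; rewrite -scalerAr -scalerAl hx. Qed.

Definition w z := z - z * q + k *: (q * z).

Lemma bracket_inner x z : bracket4 q k x z = x * w z - w z * x.
Proof.
rewrite /bracket4 /w !mulrDr !mulrDl !mulrN !mulNr -?scalerAr -?scalerAl !mulrA.
rewrite !opprD !opprK !addrA.
set a := x * z; set b := z * x; set c := z * q * x; set d := x * z * q.
set e := k *: (x * q * z); set f := k *: (q * z * x).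
congr (_ - f).
have -> : a - b + c - d + e = a + (- b + c) + (- d + e) by rewrite !addrA.
have -> : a - d + e - b + c = a + (- d + e) + (- b + c) by rewrite !addrA.
by rewrite -(addrA a (- b + c)) (addrC (- b + c)) addrA.
Qed.

Lemma wq z : inv_alg q z -> q * w z = w z * q.
Proof.
rewrite /inv_alg /w => hz.
rewrite !mulrDr !mulrDl !mulrN !mulNr -?scalerAr -?scalerAl !mulrA.
by rewrite hz qq -(mulrA z q q) qq !subrr !add0r.
Qed.


Definition D (v a : A) := a * v - v * a.

Lemma D_mul v a b : D v (a * b) = D v a * b + a * D v b.
Proof.
rewrite /D mulrBl mulrBr !mulrA addrA addrAC.
by rewrite [a * v * b - _ - _]addrAC subrr add0r addrC.
Qed.

Lemma D_add v a b : D v (a + b) = D v a + D v b.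
Proof. by rewrite /D mulrDl mulrDr opprD addrACA. Qed.

Lemma D_opp v a : D v (- a) = - D v a.
Proof. by rewrite /D mulrN mulNr opprB opprK addrC. Qed.

Lemma D_scale v c a : D v (c *: a) = c *: D v a.
Proof. by rewrite /D scalerBr -scalerAl -scalerAr. Qed.

Lemma D_q (v : A) : q * v = v * q -> D v q = 0.
Proof. by move=> h; rewrite /D h subrr. Qed.

Lemma D_bracket v a b : q * v = v * q ->
  D v (bracket4 q k a b) = bracket4 q k (D v a) b + bracket4 q k a (D v b).
Proof.
move=> h; rewrite /bracket4.
rewrite !(D_add, D_opp, D_scale, D_mul) (D_q _ h) !mulr0 !mul0r !addr0 !add0r.
move: (D v a) (D v b) => da db.
rewrite ?opprD ?scalerDr ?scalerN ?opprD.
rewrite !mulrDl ?opprD (addrC (- (db * a))) (addrC (db * q * a)) (addrC (- (k *: (q * db * a)))).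
exact: reorg.
Qed.

End Aux.

Theorem proposition1p3 (F : fieldType) (A : algType F) (q : A) (k : F) :
  q * q = q ->
  (forall x y, inv_alg q x -> inv_alg q y -> inv_alg q (bracket4 q k x y)) /\
  (forall x y z, inv_alg q x -> inv_alg q y -> inv_alg q z ->
     bracket4 q k (bracket4 q k x y) z =
     bracket4 q k x (bracket4 q k y z) + bracket4 q k (bracket4 q k x z) y).
Proof.
move=> qq; split.
  move=> x y hx hy; rewrite /bracket4.
  have hq : inv_alg q q by exact: inv_q.
  repeat (apply: inv_add || apply: inv_opp || apply: inv_scale || apply: inv_mul) => //.
move=> x y z hx hy hz.
have h := @wq _ _ q k qq z hz.
rewrite [LHS]bracket_inner.
rewrite -[LHS]/(@D _ _ (@w _ _ q k z) (bracket4 q k x y) : A) D_bracket //.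
by rewrite /D -!bracket_inner addrC.
Qed.
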